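(* Let $n\ge1$. Then $x=2$ is a double zero of $\Phi_n(x)$, i.e. $\Phi_n(2)=\Phi_n'(2)=0$ and $\Phi_n''(2)\neq0$. Moreover, all zeros of $\Phi_n(x)$ other than $x=2$ are real and lie in the interval $(-2,2)$.
   Context: $U_n$ is the Chebyshev polynomial of the second kind, $U_n(\cos\theta)=\sin((n+1)\theta)/\sin\theta$, $\tilde U_n(x)=U_n(x/2)$, and $\Phi_n(x)=((n+1)x^2-6x-4n)\tilde U_n(x)+2(x+2)\tilde U_{n-1}(x)+2(x+2)$. *)

(* Defs.v *)
From HB Require Import structures.
From mathcomp Require Import all_boot all_order all_algebra all_field.
Set Implicit Arguments. Unset Strict Implicit. Unset Printing Implicit Defensive.
Import Order.TTheory GRing.Theory Num.Theory.
Local Open Scope ring_scope.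

(* Ut n = \tilde U_n(x) = U_n(x/2): Ut 0 = 1, Ut 1 = X,
   Ut (n+2) = X * Ut (n+1) - Ut n  (from U_{n+1}(y) = 2y U_n(y) - U_{n-1}(y)). *)
Fixpoint Ut_pair (R : nzRingType) (n : nat) : {poly R} * {poly R} :=
  match n with
  | 0 => (1, 'X)
  | m.+1 => let: (a, b) := Ut_pair R m in (b, 'X * b - a)
  end.

Definition Ut (R : nzRingType) (n : nat) : {poly R} := (Ut_pair R n).1.

Definition Phi (R : nzRingType) (n : nat) : {poly R} :=
  ((n.+1)%:R *: 'X^2 - 6%:R *: 'X - (4 * n)%:R%:P) * Ut R n
  + 2%:R *: ('X + 2%:R%:P) * Ut R n.-1
  + 2%:R *: ('X + 2%:R%:P).

(* Main.v *)
Require Import Defs.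
From HB Require Import structures.
From mathcomp Require Import all_boot all_order all_algebra all_field.
From mathcomp Require Import ring lra zify.
From mathcomp Require polyrcf.
Import Order.TTheory GRing.Theory Num.Theory.
Local Open Scope ring_scope.
Set Implicit Arguments. Unset Strict Implicit. Unset Printing Implicit Defensive.

(* Proof sketch: with y^2 = x + 2 one has
   y * Phi_n(y^2 - 2) = U_n(y) * E(y) where E = A*C_{n+1} + 2 y^2 C_{n-1}
   (C = Chebyshev/Lucas polynomials).  Roots of U_n are real in (-2,2)
   (unit-circle argument); E has N = n+1 real roots in (-2,2) found by
   sign changes at the roots of C_{n+1} (and 0), and E = (y^2-4)^2 E0 with
   deg E0 = N. *)

Lemma lin1 (T : comNzRingType) (L R h v c : T) :
  L - R = c * (h - v) -> h = v -> L = R.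
Proof. by move=> e hv; apply/eqP; rewrite -subr_eq0 e hv subrr mulr0. Qed.
Lemma lin2 (T : comNzRingType) (L R h1 v1 h2 v2 c1 c2 : T) :
  L - R = c1 * (h1 - v1) + c2 * (h2 - v2) -> h1 = v1 -> h2 = v2 -> L = R.
Proof. by move=> e h1v h2v; apply/eqP; rewrite -subr_eq0 e h1v h2v !subrr !mulr0 addr0. Qed.

Lemma lin3 (T : comNzRingType) (L R h1 v1 h2 v2 h3 v3 c1 c2 c3 : T) :
  L - R = c1 * (h1 - v1) + c2 * (h2 - v2) + c3 * (h3 - v3) -> h1 = v1 -> h2 = v2 -> h3 = v3 -> L = R.
Proof. by move=> e h1v h2v h3v; apply/eqP; rewrite -subr_eq0 e h1v h2v h3v !subrr !mulr0 !addr0. Qed.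

Lemma horner_natr (R : nzRingType) k (x : R) : (k%:R : {poly R}).[x] = k%:R.
Proof. by rewrite -polyC_natr hornerC. Qed.

Ltac hsimp := rewrite ?(horner_natr, hornerD, hornerN, hornerM, hornerX, hornerC, horner_exp).

Section Cheb.
Variable R : comNzRingType.
Local Notation U := (Ut R).

Lemma Ut_pairE k : Ut_pair R k = (U k, U k.+1).
Proof. elim: k => [|k IH] //=. by rewrite /Ut /= IH. Qed.
Lemma U0 : U 0 = 1. Proof. by []. Qed.
Lemma U1 : U 1 = 'X. Proof. by []. Qed.
Lemma US2 k : U k.+2 = 'X * U k.+1 - U k.
Proof. by rewrite {1}/Ut /= Ut_pairE. Qed.

Fixpoint Cp (k : nat) : {poly R} * {poly R} :=
  match k with
  | 0 => (2%:R, 'X)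
  | m.+1 => let: (a, b) := Cp m in (b, 'X * b - a)
  end.
Definition C k := (Cp k).1.
Lemma CpE k : Cp k = (C k, C k.+1).
Proof. elim: k => [|k IH] //=. by rewrite /C /= IH. Qed.
Lemma C0 : C 0 = 2%:R. Proof. by []. Qed.
Lemma C1 : C 1 = 'X. Proof. by []. Qed.
Lemma CS2 k : C k.+2 = 'X * C k.+1 - C k.
Proof. by rewrite {1}/C /= CpE. Qed.

Lemma casD k : U k.+1 * C k - U k * C k.+1 = 'X.
Proof.
elim: k => [|k IH]; first by rewrite U0 U1 C0 C1; ring.
by rewrite US2 CS2 -IH; ring.
Qed.

Lemma casH k : C k.+1 * U k.+1 - C k.+2 * U k = 2%:R.
Proof.
elim: k => [|k IH]; first by rewrite U0 U1 C1 CS2 C1 C0; ring.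
by rewrite [U k.+2]US2 [C k.+3]CS2 -IH; ring.
Qed.

Lemma cassini k : U k.+1 ^+ 2 - U k.+2 * U k = 1.
Proof.
elim: k => [|k IH]; first by rewrite US2 U1 U0; ring.
by rewrite [U k.+3]US2 -IH US2; ring.
Qed.

Lemma CXU k : C k.+2 = 'X * U k.+1 - 2%:R * U k.
Proof.
elim/ltn_ind: k => -[|[|k]] IH.
- by rewrite CS2 C1 C0 U1 U0; ring.
- by rewrite CS2 CS2 C1 C0 US2 U1 U0; ring.
- by rewrite CS2 (IH k.+1) // (IH k) // !US2; ring.
Qed.

Lemma Cgap k : exists K, C k * U k.+1 = C k.+2 * K + 2%:R * 'X.
Proof.
case: k => [|j]; first by exists 0; rewrite C0 U1; ring.
exists (U j).
have h := casH j.
apply: (lin1 (c := 'X) _ h).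
rewrite [U j.+2]US2 [C j.+3]CS2; ring.
Qed.

Lemma derivCh k : (C k.+1)^`() = (k.+1)%:R * U k.
Proof.
elim/ltn_ind: k => -[|[|k]] IH.
- by rewrite C1 derivX U0 mulr1.
- rewrite CS2 C1 C0 U1 derivB derivM derivX -polyC_natr derivC; ring.
- rewrite CS2 derivB derivM derivX (IH k.+1) // (IH k) // CXU [U k.+2]US2.
  rewrite !mulrS; ring.
Qed.

Lemma pell k : C k.+1 ^+ 2 - ('X ^+ 2 - 4%:R) * U k ^+ 2 = 4%:R.
Proof.
case: k => [|k]; first by rewrite C1 U0; ring.
have h := cassini k.
apply: (lin1 (c := 4%:R) _ h).
rewrite CXU US2; ring.
Qed.

Lemma compU m : 'X * (U m \Po ('X ^+ 2 - 2%:R)) = U m * C m.+1.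
Proof.
elim/ltn_ind: m => -[|[|m]] IH.
- by rewrite U0 -polyC1 comp_polyC polyC1 C1; ring.
- by rewrite U1 comp_polyX CS2 C1 C0; ring.
- rewrite US2 comp_polyB comp_polyM comp_polyX.
  have e1 := IH m.+1 (ltnSn _). have e0 := IH m (ltnW (ltnSn _)).
  have -> : 'X * (('X ^+ 2 - 2%:R) * (U m.+1 \Po ('X ^+ 2 - 2%:R)) - (U m \Po ('X ^+ 2 - 2%:R)))
     = ('X ^+ 2 - 2%:R) * ('X * (U m.+1 \Po ('X ^+ 2 - 2%:R))) - 'X * (U m \Po ('X ^+ 2 - 2%:R)) by ring.
  rewrite e1 e0.
  apply: (lin2 (c1 := - 'X) (c2 := 2%:R) _ (casH m) (casD m)).
  rewrite [C m.+3]CS2 [C m.+2]CS2; ring.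
Qed.

Lemma comp_natr k (q : {poly R}) : (k%:R : {poly R}) \Po q = k%:R.
Proof. by rewrite -polyC_natr comp_polyC. Qed.

Definition Apoly n : {poly R} :=
  (n.+1)%:R * ('X ^+ 2 - 2%:R) ^+ 2 - 6%:R * ('X ^+ 2 - 2%:R) - (4 * n)%:R.
Definition E n : {poly R} := Apoly n * C n.+1 + 2%:R * 'X ^+ 2 * C n.-1.

Lemma PhiE n : Phi R n = ((n.+1)%:R * 'X ^+ 2 - 6%:R * 'X - (4 * n)%:R) * U n
   + 2%:R * ('X + 2%:R) * U n.-1 + 2%:R * ('X + 2%:R).
Proof. by rewrite /Phi -!mul_polyC !polyC_natr. Qed.

Lemma Phi_comp m : 'X * (Phi R m.+1 \Po ('X ^+ 2 - 2%:R)) = U m.+1 * E m.+1.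
Proof.
rewrite /Phi -!mul_polyC /E /Apoly /=.
rewrite !(comp_polyB, comp_polyD, comp_polyM, comp_polyC, rmorphXn, comp_polyX) !polyC_natr.
set q := 'X ^+ 2 - 2%:R.
have e1 := compU m.+1. have e0 := compU m.
apply: (lin3 (c1 := m.+2%:R * q ^+ 2 - 6%:R * q - (4 * m.+1)%:R) (c2 := 2%:R * 'X ^+ 2)
   (c3 := -2%:R * 'X ^+ 2) _ e1 e0 (casD m)).
rewrite /q; ring.
Qed.


Lemma dU k : (U k.+2)^`() = U k.+1 + 'X * (U k.+1)^`() - (U k)^`().
Proof. by rewrite US2 derivB derivM derivX mul1r. Qed.
Lemma ddU k : (U k.+2)^`()^`() = 2%:R * (U k.+1)^`() + 'X * (U k.+1)^`()^`() - (U k)^`()^`().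
Proof. rewrite dU !derivB !derivD derivM derivX; ring. Qed.

Lemma Ue2 k : (U k).[2%:R] = (k.+1)%:R.
Proof.
elim/ltn_ind: k => -[|[|k]] IH.
- by rewrite U0 hornerC.
- by rewrite U1 hornerX.
- rewrite US2; hsimp; rewrite (IH k.+1) // (IH k) //. rewrite !mulrS; ring.
Qed.

Lemma Uem2 k : (U k).[-2%:R] = (-1) ^+ k * (k.+1)%:R.
Proof.
elim/ltn_ind: k => -[|[|k]] IH.
- by rewrite U0 hornerC; ring.
- by rewrite U1 hornerX; ring.
- rewrite US2; hsimp; rewrite (IH k.+1) // (IH k) //. rewrite !exprS !mulrS; ring.
Qed.

Definition a k := ((U k)^`()).[2%:R].
Definition b k := ((U k)^`()^`()).[2%:R].

Lemma a_val k : 6%:R * a k = (k * k.+1 * k.+2)%:R.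
Proof.
rewrite /a.
elim/ltn_ind: k => -[|[|k]] IH.
- by rewrite U0 -polyC1 derivC hornerC mulr0.
- by rewrite U1 derivX hornerC mulr1.
- rewrite dU; hsimp; rewrite Ue2.
  have h1 := IH k.+1 (ltnSn _). have h0 := IH k (ltnW (ltnSn _)).
  apply: (lin2 (c1 := 2%:R) (c2 := -1) _ h1 h0).
  rewrite !natrM !mulrS; ring.
Qed.

Lemma db_val k : 12%:R * (b k.+1 - b k) = (k * k.+1 * k.+2 * k.+3)%:R.
Proof.
rewrite /b.
elim: k => [|k IH].
- by rewrite U1 U0 derivX -polyC1 !derivC hornerC subrr mulr0.
- rewrite ddU; hsimp.
  have h1 := a_val k.+1. rewrite /a in h1.
  apply: (lin2 (c1 := 4%:R) (c2 := 1) _ h1 IH).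
  rewrite !natrM !mulrS; ring.
Qed.


Lemma evalWC (w v : R) : w * v = 1 -> forall k, (C k).[w + v] = w ^+ k + v ^+ k.
Proof.
move=> wv; elim/ltn_ind => -[|[|k]] IH.
- by rewrite C0 horner_natr !expr0.
- by rewrite C1 hornerX !expr1.
- rewrite CS2; hsimp; rewrite (IH k.+1) // (IH k) //.
  apply: (lin1 (c := w ^+ k + v ^+ k) _ wv).
  rewrite !exprS; ring.
Qed.

Lemma evalWU (w v : R) : w * v = 1 -> forall k, (U k).[w + v] * (w - v) = w ^+ k.+1 - v ^+ k.+1.
Proof.
move=> wv; elim/ltn_ind => -[|[|k]] IH.
- by rewrite U0 hornerC !expr1 mul1r.
- rewrite U1 hornerX.
  apply: (lin1 (c := 0) _ wv). rewrite !exprS !expr0; ring.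
- rewrite US2; hsimp.
  have -> : ((w + v) * (U k.+1).[w + v] - (U k).[w + v]) * (w - v)
     = (w + v) * ((U k.+1).[w + v] * (w - v)) - (U k).[w + v] * (w - v) by ring.
  rewrite (IH k.+1) // (IH k) //.
  apply: (lin1 (c := w ^+ k.+1 - v ^+ k.+1) _ wv).
  rewrite !exprS; ring.
Qed.
End Cheb.


Section Vals.
Variable F : numFieldType.
Local Notation U := (Ut F).

Lemma deriv_natr k : ((k%:R : {poly F}))^`() = 0.
Proof. by rewrite -polyC_natr derivC. Qed.

Lemma deriv1' : (1 : {poly F})^`() = 0.
Proof. by rewrite -polyC1 derivC. Qed.

Lemma PhiE2 m : Phi F m.+1 = (m.+2%:R * ('X * 'X) - 6%:R * 'X - (4 * m.+1)%:R) * U m.+1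
   + 2%:R * ('X + 2%:R) * U m + 2%:R * ('X + 2%:R).
Proof. by rewrite PhiE expr2. Qed.

Lemma a_val' k : a F k = (k * k.+1 * k.+2)%:R / 6%:R.
Proof.
have h := a_val F k. have n6 : (6%:R : F) != 0 by rewrite pnatr_eq0.
by rewrite -h mulrC mulKf.
Qed.

Lemma Phi2 m : (Phi F m.+1).[2%:R] = 0.
Proof. rewrite PhiE2; hsimp; rewrite !Ue2 !natrM !mulrS; ring. Qed.

Lemma dPhi2 m : ((Phi F m.+1)^`()).[2%:R] = 0.
Proof.
have n6 : (6%:R : F) != 0 by rewrite pnatr_eq0.
rewrite PhiE2 !(deriv_natr, derivB, derivD, derivM, derivX); hsimp.
rewrite !Ue2.
have := a_val' m.+1. have := a_val' m. rewrite /a => -> ->.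
rewrite !natrM !mulrS. by field.
Qed.

Lemma b_succ k : b F k.+1 = b F k + (k * k.+1 * k.+2 * k.+3)%:R / 12%:R.
Proof.
have h := db_val F k. have n12 : (12%:R : F) != 0 by rewrite pnatr_eq0.
by rewrite -h mulrC mulKf // addrC subrK.
Qed.

Lemma ddPhi2 m : 3%:R * ((Phi F m.+1)^`(2)).[2%:R] =
  (2 * (m.+1 ^ 4 + 4 * m.+1 ^ 3 + 5 * m.+1 ^ 2 + 5 * m.+1 + 3))%:R.
Proof.
have n6 : (6%:R : F) != 0 by rewrite pnatr_eq0.
have n12 : (12%:R : F) != 0 by rewrite pnatr_eq0.
rewrite derivnS derivn1.
rewrite PhiE2 !(deriv_natr, derivB, derivD, derivM, derivX, deriv0, deriv1'); hsimp.
rewrite !Ue2.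
have := a_val' m.+1. have := a_val' m. rewrite /a => -> ->.
have := b_succ m. rewrite /b => ->.
rewrite !natrM !natrD !natrX !natrM !mulrS. by field.
Qed.

Lemma ddPhi2_neq0 m : ((Phi F m.+1)^`(2)).[2%:R] != 0.
Proof.
apply/negP => /eqP h. have := ddPhi2 m. rewrite h mulr0 => /eqP.
by rewrite eq_sym pnatr_eq0.
Qed.

Lemma Phim2 m : (Phi F m.+1).[-2%:R] = 16%:R * (-1) ^+ m.+1 * m.+2%:R.
Proof. rewrite PhiE2; hsimp; rewrite !Uem2 !natrM !mulrS !exprS; ring. Qed.

End Vals.


Lemma wsplit (y : algC) : exists w v : algC, w * v = 1 /\ y = w + v.
Proof.
set s := sqrtC (y ^+ 2 - 4%:R).
exists ((y + s) / 2%:R), ((y - s) / 2%:R).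
have n2 : (2%:R : algC) != 0 by rewrite pnatr_eq0.
split.
- have hs : s ^+ 2 = y ^+ 2 - 4%:R by rewrite sqrtCK.
  apply: (lin1 (c := - 4%:R^-1) _ hs). by field.
- by field.
Qed.

Lemma inv_of (w v : algC) : w * v = 1 -> v = w^-1.
Proof.
move=> wv. have w0 : w != 0 by apply/negP => /eqP w0; move: wv; rewrite w0 mul0r => /eqP; rewrite eq_sym oner_eq0.
by rewrite -[v]mul1r -(mulVf w0) -mulrA wv mulr1.
Qed.

Lemma circle (w v : algC) m : (0 < m)%N -> w * v = 1 -> w ^+ m = 1 ->
  (w + v) \is Num.real /\ `|w + v| <= 2%:R.
Proof.
move=> m0 wv wm.
have nw : `|w| = 1.
  apply/eqP; rewrite -(pexpr_eq1 m0) ?normr_ge0 //.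
  by rewrite -normrX wm normr1.
have vE : v = w^* by rewrite (inv_of wv) invC_norm nw expr1n invr1 mul1r.
split.
- by rewrite CrealE vE raddfD /= conjCK addrC.
- apply: le_trans (ler_normD w v) _.
  by rewrite (inv_of wv) normfV nw invr1.
Qed.

Lemma sq4 (w v : algC) : w * v = 1 -> (w + v) ^+ 2 = 4%:R -> w = v.
Proof.
move=> wv h.
have : (w - v) ^+ 2 = 0.
  apply: (lin2 (c1 := 1) (c2 := -4%:R) _ h wv). ring.
by move/eqP; rewrite expf_eq0 /= subr_eq0 => /eqP.
Qed.

Lemma rootC_real (y : algC) N : (0 < N)%N -> root (C algC N) y ->
  [/\ y \is Num.real, `|y| <= 2%:R & y ^+ 2 != 4%:R].
Proof.
move=> N0 ry.
have [w [v [wv yE]]] := wsplit y.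
rewrite yE in ry *.
have hC := evalWC wv N.
move: ry; rewrite rootE hC => /eqP h.
have w2N : w ^+ (N + N) = -1.
  have : (w * v) ^+ N = 1 by rewrite wv expr1n.
  rewrite exprMn => e.
  apply: (lin2 (c1 := w ^+ N) (c2 := -1) _ h e).
  rewrite exprD; ring.
have w4N : w ^+ ((N + N) + (N + N)) = 1 by rewrite exprD w2N mulrNN mulr1.
have [yR yn] := circle (m := (N + N) + (N + N)) ltac:(by rewrite addn_gt0 !addn_gt0 N0) wv w4N.
split => //.
apply/negP => /eqP h4. have e := sq4 wv h4.
move: w2N; rewrite e.
have -> : v ^+ (N + N) = (v * v) ^+ N by rewrite exprMn exprD.
rewrite -{1}e wv expr1n => /eqP.
rewrite -subr_eq0 opprK => h2.
have : (2%:R : algC) == 0 := h2.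
by rewrite pnatr_eq0.
Qed.

Lemma sq4E (y : algC) : y ^+ 2 = 4%:R -> y = 2%:R \/ y = - 2%:R.
Proof.
move=> h. have : (y - 2%:R) * (y + 2%:R) = 0.
  apply: (lin1 (c := 1) _ h). ring.
move/eqP; rewrite mulf_eq0 => /orP[]; rewrite ?subr_eq0 ?addr_eq0 => /eqP; by [left|right].
Qed.

Lemma U2_neq0 k : (Ut algC k).[2%:R] != 0.
Proof. by rewrite Ue2 pnatr_eq0. Qed.
Lemma Um2_neq0 k : (Ut algC k).[-2%:R] != 0.
Proof. by rewrite Uem2 mulf_neq0 ?signr_eq0 ?pnatr_eq0. Qed.

Lemma rootU_real (y : algC) k : root (Ut algC k) y ->
  [/\ y \is Num.real, `|y| <= 2%:R & y ^+ 2 != 4%:R].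
Proof.
move=> ry.
have y4 : y ^+ 2 != 4%:R.
  apply/negP => /eqP /sq4E [] e; move: ry; rewrite e rootE.
  - by rewrite (negPf (U2_neq0 k)).
  - by rewrite (negPf (Um2_neq0 k)).
have [w [v [wv yE]]] := wsplit y.
rewrite yE in ry y4 *.
have wv0 : w - v != 0.
  apply/negP; rewrite subr_eq0 => /eqP e; move: y4; rewrite e.
  have -> : (v + v) ^+ 2 = 4%:R * (v * v) by ring.
  by rewrite -{1}e wv mulr1 eqxx.
have hU := evalWU wv k.
move: ry; rewrite rootE => /eqP h; rewrite h mul0r in hU.
have e : w ^+ (k.+1 + k.+1) = 1.
  have : (w * v) ^+ k.+1 = 1 by rewrite wv expr1n.
  rewrite exprMn => e.
  apply: (lin2 (c1 := - w ^+ k.+1) (c2 := 1) _ hU e).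
  rewrite exprD; ring.
have [yR yn] := circle (m := k.+1 + k.+1) ltac:(by []) wv e.
by split.
Qed.


Section RCF.
Variable R : rcfType.

Lemma path_last_ge (x0 : R) s : path <%R x0 s -> x0 <= last x0 s.
Proof.
elim: s x0 => [|y s IH] x0 /=; first by [].
by case/andP => xy /IH; apply: le_trans; apply: ltW.
Qed.

Lemma collect (f : {poly R}) (x0 : R) (s : seq R) :
  path <%R x0 s -> path (fun a b => f.[a] * f.[b] < 0) x0 s ->
  exists rs : seq R, [/\ size rs = size s, uniq rs, all (root f) rs &
     all (fun r => x0 < r < last x0 s) rs].
Proof.
elim: s x0 => [|y s IH] x0 /=; first by move=> _ _; exists [::].
case/andP => xy ps /andP[fxy pfs].
have [rs [h1 h2 h3 h4]] := IH y ps pfs.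
have [r rin rr] := polyrcf.poly_ivtoo (ltW xy) fxy.
move: rin; rewrite in_itv /= => /andP [xr ry].
have yl := path_last_ge ps.
exists (r :: rs); split => /=.
- by rewrite h1.
- rewrite h2 andbT; apply/negP => rin.
  by move: (allP h4 r rin) => /andP[yr _]; move: (lt_trans ry yr); rewrite ltxx.
- by rewrite rr.
- rewrite xr (lt_le_trans ry yl) /=.
  apply/allP => r' /(allP h4) /andP[yr' r'l]; by rewrite (lt_trans xy yr') r'l.
Qed.

Lemma path_gaps (P : rel R) (x0 : R) s :
  path <%R x0 s ->
  (forall a b, a \in x0 :: s -> b \in x0 :: s -> a < b ->
     (forall c, c \in x0 :: s -> (c <= a) || (b <= c)) -> P a b) ->
  path P x0 s.
Proof.
elim: s x0 => [|y s IH] x0 //= /andP[xy ps] H.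
have ys : all (fun c => y < c) s by apply: order_path_min ps; apply: lt_trans.
apply/andP; split.
- apply: H.
  + by rewrite mem_head.
  + by rewrite !inE eqxx orbT.
  + exact: xy.
  move=> c; rewrite !inE => /or3P[/eqP->|/eqP->|cs].
  * by rewrite lexx.
  * by rewrite lexx orbT.
  * by rewrite (ltW (allP ys c cs)) orbT.
- apply: IH => // a b ain bin ab gap.
  apply: H => //; try by rewrite inE ?ain ?bin orbT.
  move=> c; rewrite inE => /orP[/eqP->|cin]; last exact: gap.
  move: ain; rewrite inE => /orP[/eqP->|ain]; first by rewrite (ltW xy).
  by rewrite (ltW (lt_trans xy (allP ys a ain))).
Qed.

Lemma dXsub (r : {poly R}) c : ((r * ('X - c%:P))^`()).[c] = r.[c].
Proof. by rewrite derivM derivXsubC mulr1 !hornerE subrr mulr0 add0r. Qed.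

Lemma no_sign_change (q : {poly R}) a b : a <= b ->
  (forall c, a <= c <= b -> ~~ root q c) -> 0 < q.[a] * q.[b].
Proof.
move=> ab H.
rewrite ltNge; apply/negP => h.
have [c cin rc] := polyrcf.poly_ivt ab h.
move: cin; rewrite in_itv /= => /andP [ac cb].
by move: (H c); rewrite ac cb rc => /(_ isT).
Qed.

Lemma consec (p : {poly R}) a b : a < b -> root p a -> root p b ->
  (p^`()).[a] != 0 -> (p^`()).[b] != 0 ->
  (forall c, a < c < b -> ~~ root p c) -> (p^`()).[a] * (p^`()).[b] < 0.
Proof.
move=> ab /factor_theorem [q1 e1] rb da db gap.
have : root q1 b.
  move: rb; rewrite e1 rootE !hornerE => /eqP /eqP.
  rewrite mulf_eq0 subr_eq0 => /orP[//|/eqP ba].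
  by move: ab; rewrite ba ltxx.
move=> /factor_theorem [q e2].
have ea : p = (q * ('X - b%:P)) * ('X - a%:P) by rewrite e1 e2.
have eb : p = (q * ('X - a%:P)) * ('X - b%:P) by rewrite ea -!mulrA [_ * ('X - a%:P)]mulrC.
have pa : (p^`()).[a] = q.[a] * (a - b) by rewrite {1}ea dXsub !hornerE.
have pb : (p^`()).[b] = q.[b] * (b - a) by rewrite {1}eb dXsub !hornerE.
have qpos : 0 < q.[a] * q.[b].
  apply: no_sign_change; first exact: ltW.
  move=> c /andP[ac cb]; apply/negP => rq.
  have [eca|nca] := eqVneq c a.
    by move: da; rewrite pa -eca (rootP rq) mul0r eqxx.
  have [ecb|ncb] := eqVneq c b.
    by move: db; rewrite pb -ecb (rootP rq) mul0r eqxx.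
  have := gap c; rewrite !lt_neqAle eq_sym nca ac ncb cb /= => /(_ isT).
  by rewrite ea rootE !hornerE (rootP rq) !mul0r eqxx.
rewrite pa pb.
have -> : q.[a] * (a - b) * (q.[b] * (b - a)) = - ((q.[a] * q.[b]) * (b - a) ^+ 2) by ring.
rewrite oppr_lt0 mulr_gt0 // exprn_gt0 // subr_gt0 //.
Qed.

Lemma sideR (p : {poly R}) a c : a < c -> root p a -> (p^`()).[a] != 0 ->
  (forall x, a < x <= c -> ~~ root p x) -> 0 < p.[c] * (p^`()).[a].
Proof.
move=> ac /factor_theorem [q e] da gap.
have pa : (p^`()).[a] = q.[a] by rewrite e dXsub.
have qpos : 0 < q.[a] * q.[c].
  apply: no_sign_change; first exact: ltW.
  move=> x /andP[ax xc]; apply/negP => rq.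
  have [exa|nxa] := eqVneq x a.
    by move: da; rewrite pa -exa (rootP rq) eqxx.
  have := gap x; rewrite lt_neqAle eq_sym nxa ax xc /= => /(_ isT).
  by rewrite e rootE !hornerE (rootP rq) !mul0r eqxx.
rewrite pa e !hornerE.
have -> : q.[c] * (c - a) * q.[a] = (q.[a] * q.[c]) * (c - a) by ring.
by rewrite mulr_gt0 // subr_gt0.
Qed.

Lemma sideL (p : {poly R}) b c : c < b -> root p b -> (p^`()).[b] != 0 ->
  (forall x, c <= x < b -> ~~ root p x) -> p.[c] * (p^`()).[b] < 0.
Proof.
move=> cb /factor_theorem [q e] db gap.
have pb : (p^`()).[b] = q.[b] by rewrite e dXsub.
have qpos : 0 < q.[c] * q.[b].
  apply: no_sign_change; first exact: ltW.
  move=> x /andP[cx xb]; apply/negP => rq.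
  have [exb|nxb] := eqVneq x b.
    by move: db; rewrite pb -exb (rootP rq) eqxx.
  have := gap x; rewrite (lt_neqAle x) nxb cx xb /= => /(_ isT).
  by rewrite e rootE !hornerE (rootP rq) !mul0r eqxx.
rewrite pb e !hornerE.
have -> : q.[c] * (c - b) * q.[b] = - ((q.[c] * q.[b]) * (b - c)) by ring.
by rewrite oppr_lt0 mulr_gt0 // subr_gt0.
Qed.

Lemma sgn3 (x y z : R) : x * z < 0 -> 0 < y * z -> x * y < 0.
Proof. move=> h1 h2. nra. Qed.
Lemma sgn4 (x y z w : R) : 0 < x * z -> 0 < y * w -> z * w < 0 -> x * y < 0.
Proof. move=> h1 h2 h3. nra. Qed.
Lemma sgn5 (x y z w : R) : 0 < (x * z) * (y * w) -> z * w < 0 -> x * y < 0.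
Proof. move=> h1 h2. nra. Qed.

Local Notation U := (Ut R).
Local Notation CC := (C R).

Lemma A0 n : (Apoly R n).[0] = 16%:R.
Proof. rewrite /Apoly; hsimp. rewrite !natrM !mulrS. ring. Qed.

Section Facts.
Variable m : nat.
Local Notation N := m.+2.
Local Notation EE := (E R m.+1).

Lemma rootfacts t : root (CC N) t ->
  [/\ ((CC N)^`()).[t] != 0, EE.[t] * ((CC N)^`()).[t] = 4%:R * N%:R * t ^+ 3
    & EE.[t] = 2%:R * t ^+ 2 * (CC m).[t]].
Proof.
move=> /rootP r0.
have dC := derivCh R m.+1.
have pl := pell R m.+1.
have [K gp] := Cgap R m.
have hp : - (t ^+ 2 - 4%:R) * (U m.+1).[t] ^+ 2 = 4%:R.
  have h := congr1 (horner^~ t) pl; move: h; hsimp; rewrite r0 => h.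
  apply: (lin1 (c := 1) _ h); ring.
have Un0 : (U m.+1).[t] != 0.
  apply/negP => /eqP u0; move: hp; rewrite u0 => /eqP.
  rewrite expr0n /= mulr0 eq_sym pnatr_eq0 //.
have Ng : (CC m).[t] * (U m.+1).[t] = 2%:R * t.
  have h := congr1 (horner^~ t) gp; move: h; hsimp; rewrite r0 => h.
  apply: (lin1 (c := 1) _ h); ring.
have Et : EE.[t] = 2%:R * t ^+ 2 * (CC m).[t].
  rewrite /E /=; hsimp; rewrite r0; ring.
split => //.
- by rewrite dC; hsimp; rewrite mulf_neq0 // pnatr_eq0.
- rewrite Et dC; hsimp.
  apply: (lin1 (c := 2%:R * t ^+ 2 * N%:R) _ Ng). ring.
Qed.

Lemma E0val : EE.[0] = 16%:R * (CC N).[0].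
Proof. rewrite /E /= hornerD hornerM A0; hsimp; ring. Qed.


Lemma bnd0 : -2%:R < (0 : R) < 2%:R.
Proof. apply/andP; split; lra. Qed.

Lemma E_roots (ts : seq R) :
  sorted <%R ts -> size ts = N -> (forall t, root (CC N) t = (t \in ts)) ->
  (forall t, t \in ts -> -2%:R < t < 2%:R) ->
  exists rs : seq R, [/\ size rs = N, uniq rs, all (root EE) rs &
                      all (fun r => -2%:R < r < 2%:R) rs].
Proof.
move=> sts sz rts bts.
have inS_root t : t \in ts -> root (CC N) t by rewrite rts.
have consecC a b : a \in ts -> b \in ts -> a < b ->
    (forall c, c \in ts -> (c <= a) || (b <= c)) ->
    ((CC N)^`()).[a] * ((CC N)^`()).[b] < 0.
  move=> ain bin ab gap.
  have [da _ _] := rootfacts (inS_root a ain).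
  have [db _ _] := rootfacts (inS_root b bin).
  apply: consec => //; try exact: inS_root.
  move=> c /andP[ac cb]; apply/negP; rewrite rts => cin.
  by move: (gap c cin); rewrite !leNgt ac cb.
have [c0|c0] := eqVneq (CC N).[0] 0.
-
  have r0 : root (CC N) 0 by apply/rootP.
  have z0 : 0 \in ts by rewrite -rts.
  have [D eD] := factor_theorem _ _ r0.
  set F := Apoly R m.+1 * D + 2%:R * 'X * CC m.
  have eE : EE = F * 'X.
    rewrite /E /= eD /F polyC0 subr0; ring.
  have FC t : t \in ts -> 0 < F.[t] * ((CC N)^`()).[t].
    move=> tin; have [d0 Et _] := rootfacts (inS_root t tin).
    have [et|tn0] := eqVneq t 0.
      subst t.
      have dCD : ((CC N)^`()).[0] = D.[0] by rewrite eD dXsub.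
      have F0 : F.[0] = 16%:R * D.[0] by rewrite /F hornerD !hornerM A0; hsimp; ring.
      move: d0; rewrite dCD F0 => d0.
      have : 0 < D.[0] ^+ 2 by rewrite exprn_even_gt0 //= d0.
      move=> h; nra.
    have h : (F.[t] * ((CC N)^`()).[t]) * t = (4%:R * N%:R * t ^+ 2) * t.
      move: Et; rewrite eE; hsimp => Et.
      apply: (lin1 (c := 1) _ Et); ring.
    move/mulIf: h => /(_ tn0) ->.
    by rewrite mulr_gt0 ?exprn_even_gt0 //= ?tn0 // mulr_gt0 // ltr0n.
  move: sts sz; case: ts => [|x0 s] //= in rts bts inS_root consecC z0 FC * => ps sz.
  have alt : path (fun a b => F.[a] * F.[b] < 0) x0 s.
    apply: path_gaps => // a b ain bin ab gap.
    apply: (sgn5 (z := ((CC N)^`()).[a]) (w := ((CC N)^`()).[b])).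
      by rewrite mulr_gt0 // FC.
    exact: consecC.
  have [rsF [h1 h2 h3 h4]] := collect ps alt.
  have F0n : ~~ root F 0.
    by apply/negP => /rootP f0; move: (FC 0 z0); rewrite f0 mul0r ltxx.
  exists (0 :: rsF); split => /=.
  + by rewrite h1 sz.
  + rewrite h2 andbT; apply/negP => zin.
    by move: (allP h3 0 zin); rewrite (negPf F0n).
  + rewrite {1}rootE E0val c0 mulr0 eqxx /=.
    apply/allP => r rin; rewrite eE rootE hornerM (rootP (allP h3 r rin)) mul0r //.
  + rewrite (bts 0 z0) /=.
    have bx0 := bts x0 (mem_head _ _).
    have bl := bts (last x0 s) (mem_last _ _).
    apply/allP => r rin; move: (allP h4 r rin) => /andP[xr rl].
    case/andP: bx0 => bx _; case/andP: bl => _ lb.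
    by rewrite (lt_trans bx xr) (lt_trans rl lb).
-
  have z0 : 0 \notin ts by rewrite -rts rootE c0.
  set S := sort <=%R (0 :: ts).
  have uS : uniq S by rewrite sort_uniq /= z0 (sorted_uniq (@lt_trans _ _) (@ltxx _ _) sts).
  have sS : sorted <%R S by rewrite lt_sorted_uniq_le uS sort_le_sorted.
  have mS x : (x \in S) = (x \in 0 :: ts) by rewrite mem_sort.
  have szS : size S = N.+1 by rewrite size_sort /= sz.
  have bS x : x \in S -> -2%:R < x < 2%:R.
    rewrite mS inE => /orP[/eqP->|]; [exact: bnd0 | exact: bts].
  clearbody S; clear uS; move: sS szS bS mS; case: S => [|x0 s] //= ps sz' bS mS.
  have alt : path (fun a b => EE.[a] * EE.[b] < 0) x0 s.
    apply: path_gaps => // a b ain bin ab gap.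
    move: ain bin; rewrite !mS !inE.
    have gapC : forall c, c \in ts -> (c <= a) || (b <= c).
      by move=> c cin; apply: gap; rewrite mS inE cin orbT.
    have g0 : (0 <= a) || (b <= 0) by apply: gap; rewrite mS mem_head.
    case/orP=> [/eqP ea|ain]; case/orP=> [/eqP eb|bin].
    * by move: ab; rewrite ea eb ltxx.
    *
      subst a.
      have [db Eb _] := rootfacts (inS_root b bin).
      have sl : (CC N).[0] * ((CC N)^`()).[b] < 0.
        apply: sideL => //; first exact: inS_root.
        move=> x /andP[x0' xb]; apply/negP; rewrite rts => xin.
        move: (gapC x xin); rewrite (leNgt b) xb orbF => x0''.
        have ex : x = 0 by apply/eqP; rewrite eq_le x0' x0''.
        by move: xin; rewrite ex (negPf z0).
      apply: (sgn3 (z := ((CC N)^`()).[b])).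
        by rewrite E0val -mulrA pmulr_rlt0 // ltr0n.
      rewrite Eb; apply: mulr_gt0; first by rewrite mulr_gt0 // ltr0n.
      by rewrite exprn_gt0.
    *
      subst b.
      have [da Ea _] := rootfacts (inS_root a ain).
      have sr : 0 < (CC N).[0] * ((CC N)^`()).[a].
        apply: sideR => //; first exact: inS_root.
        move=> x /andP[ax x0']; apply/negP; rewrite rts => xin.
        move: (gapC x xin); rewrite (leNgt x) ax /= => x0''.
        have ex : x = 0 by apply/eqP; rewrite eq_le x0' x0''.
        by move: xin; rewrite ex (negPf z0).
      apply: (sgn3 (z := ((CC N)^`()).[a])).
        rewrite Ea; have a3 : a ^+ 3 < 0.
          have a2 : 0 < a * a by rewrite nmulr_rgt0.
          rewrite !exprS expr0 mulr1; nra.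
        by rewrite pmulr_rlt0 // mulr_gt0 // ltr0n.
      by rewrite E0val -mulrA mulr_gt0 // ltr0n.
    *
      have [da Ea _] := rootfacts (inS_root a ain).
      have [db Eb _] := rootfacts (inS_root b bin).
      apply: (sgn5 (z := ((CC N)^`()).[a]) (w := ((CC N)^`()).[b])); last first.
        exact: consecC.
      rewrite Ea Eb.
      have an0 : a != 0 by apply/negP => /eqP e; move: ain; rewrite e (negPf z0).
      have bn0 : b != 0 by apply/negP => /eqP e; move: bin; rewrite e (negPf z0).
      have ab0 : 0 < a * b.
        case/orP: g0 => h.
        - have a0 : 0 < a by rewrite lt_neqAle eq_sym an0 h.
          by rewrite mulr_gt0 // (lt_trans a0 ab).
        - have b0 : b < 0 by rewrite lt_neqAle bn0 h.
          by rewrite nmulr_rgt0 // (lt_trans ab b0).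
      have -> : 4%:R * N%:R * a ^+ 3 * (4%:R * N%:R * b ^+ 3) =
        (4%:R * N%:R) ^+ 2 * (a * b) ^+ 3 by ring.
      by rewrite mulr_gt0 ?exprn_gt0 // mulr_gt0 // ltr0n.
  have [rs [h1 h2 h3 h4]] := collect ps alt.
  exists rs; split => //; first by rewrite h1; move: sz' => [->].
  have bx0 := bS x0 (mem_head _ _).
  have bl := bS (last x0 s) (mem_last _ _).
  apply/allP => r rin; move: (allP h4 r rin) => /andP[xr rl].
  case/andP: bx0 => bx _; case/andP: bl => _ lb.
  by rewrite (lt_trans bx xr) (lt_trans rl lb).
Qed.

End Facts.
End RCF.


Section Sizes.
Variable R : comNzRingType.
Lemma sizeC k : size (C R k.+1) = k.+2 /\ lead_coef (C R k.+1) = 1.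
Proof.
have s0 : (size (C R 0) <= 1)%N by rewrite C0 -polyC_natr size_polyC_leq1.
elim/ltn_ind: k => -[|[|k]] IH.
- by rewrite C1 size_polyX lead_coefX.
- have hX : size ('X * 'X : {poly R}) = 3 by rewrite size_mulX ?polyX_eq0 // size_polyX.
  have hl : (size (- C R 0) < size ('X * 'X : {poly R})%R)%N by rewrite size_polyN hX (leq_ltn_trans s0).
  rewrite CS2 C1 (size_polyDl hl) hX lead_coefDl // lead_coefMX lead_coefX //.
- have [s1 l1] := IH k.+1 (ltnSn _).
  have [s2 _] := IH k (ltnW (ltnSn _)).
  have nz : C R k.+2 != 0 by rewrite -size_poly_eq0 s1.
  have hX : size (C R k.+2 * 'X) = k.+4 by rewrite size_mulX // s1.
  have hl : (size (- C R k.+1) < size (C R k.+2 * 'X)%R)%N by rewrite size_polyN hX s2.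
  by rewrite CS2 mulrC (size_polyDl hl) hX lead_coefDl // lead_coefMX l1.
Qed.
End Sizes.

Section Maps.
Variables (R S : comNzRingType) (f : {rmorphism R -> S}).

Lemma map_U k : map_poly f (Ut R k) = Ut S k.
Proof.
elim/ltn_ind: k => -[|[|k]] IH.
- by rewrite !U0 rmorph1.
- by rewrite !U1 map_polyX.
- by rewrite !US2 rmorphB rmorphM /= map_polyX (IH k.+1) // (IH k).
Qed.

Lemma map_C k : map_poly f (C R k) = C S k.
Proof.
elim/ltn_ind: k => -[|[|k]] IH.
- by rewrite !C0 rmorph_nat.
- by rewrite !C1 map_polyX.
- by rewrite !CS2 rmorphB rmorphM /= map_polyX (IH k.+1) // (IH k).
Qed.

Lemma map_E n : map_poly f (E R n) = E S n.
Proof.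
rewrite /E /Apoly.
set a1 := (n.+1%:R : {poly R}). set a6 := (6%:R : {poly R}).
set a4 := ((4 * n)%:R : {poly R}). set a2 := (2%:R : {poly R}).
rewrite !(rmorphB, rmorphD, rmorphM, rmorphXn) /=.
rewrite /a1 /a2 /a4 /a6 !rmorph_nat map_polyX !map_C. rewrite !rmorph1; ring.
Qed.
End Maps.


Lemma leR (x y : algR) : (x <= y) = (algRval x <= algRval y). Proof. by []. Qed.
Lemma ltR (x y : algR) : (x < y) = (algRval x < algRval y). Proof. by []. Qed.
Lemma normR (x : algR) : algRval `|x| = `|algRval x|. Proof. by []. Qed.

Lemma toR (t : algR) : `|algRval t| <= 2%:R -> algRval t ^+ 2 != 4%:R -> -2%:R < t < 2%:R.
Proof.
move=> h1 h2.
have h1' : `|t| <= 2%:R by rewrite leR normR rmorph_nat.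
have h2' : t ^+ 2 != 4%:R.
  by apply: contra h2 => /eqP e; rewrite -rmorphXn e rmorph_nat.
move: h1'; rewrite ler_norml => /andP[a b].
have t2 : t != 2%:R by apply: contra h2' => /eqP ->; apply/eqP; ring.
have tm2 : t != -2%:R by apply: contra h2' => /eqP ->; apply/eqP; ring.
by rewrite !lt_neqAle a b eq_sym tm2 t2.
Qed.

Lemma rootC_coprime m : coprimep (C algC m.+2) (C algC m.+2)^`().
Proof.
apply: Pdiv.ClosedField.root_coprimep => t /rootP r0.
have dC := derivCh algC m.+1.
have pl := pell algC m.+1.
have hp : - (t ^+ 2 - 4%:R) * (Ut algC m.+1).[t] ^+ 2 = 4%:R.
  have h := congr1 (horner^~ t) pl; move: h; hsimp; rewrite r0 => h.
  apply: (lin1 (c := 1) _ h); ring.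
have Un0 : (Ut algC m.+1).[t] != 0.
  apply/negP => /eqP u0; move: hp; rewrite u0 => /eqP.
  rewrite expr0n /= mulr0 eq_sym pnatr_eq0 //.
by rewrite dC; hsimp; rewrite mulf_neq0 // pnatr_eq0.
Qed.

Lemma C_roots_R m : exists ts : seq algR, [/\ sorted <%R ts, size ts = m.+2,
  (forall t, root (C algR m.+2) t = (t \in ts)) &
  (forall t, t \in ts -> -2%:R < t < 2%:R)].
Proof.
set pC := C algC m.+2.
have [r er] := closed_field_poly_normal pC.
have [szC lcC] := sizeC algC m.+1.
rewrite lcC scale1r in er.
have szr : size r = m.+2.
  by move: szC; rewrite -/pC er size_prod_XsubC => -[].
have mr z : root pC z = (z \in r) by rewrite er root_prod_XsubC.
have ur : uniq r.
  by rewrite -separable_prod_XsubC -er unlock rootC_coprime.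
have rr z : z \in r -> [/\ z \is Num.real, `|z| <= 2%:R & z ^+ 2 != 4%:R].
  by move=> zin; apply: (@rootC_real z m.+2) => //; rewrite mr.
set rR := pmap (insub : algC -> option algR) r.
have erR : map algRval rR = r.
  rewrite (pmap_filter (@insubK _ _ algR)).
  apply/all_filterP/allP => z zin.
  by have [zr _ _] := rr z zin; rewrite insubT.
set ts := sort <=%R rR.
have urR : uniq rR by rewrite -(map_inj_uniq val_inj) erR.
have mts t : (t \in ts) = (algRval t \in r) by rewrite mem_sort -erR (mem_map val_inj).
exists ts; split.
- by rewrite lt_sorted_uniq_le sort_uniq urR sort_le_sorted.
- by rewrite size_sort -szr -erR size_map.
- move=> t; rewrite mts -mr /pC -(@map_C _ _ algRval).
  by rewrite mapf_root.
- move=> t; rewrite mts => /rr [_ h1 h2]; exact: toR.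
Qed.


Section SizeB.
Variable R : comNzRingType.
Implicit Types p q : {poly R}.
Lemma sD n p q : (size p <= n)%N -> (size q <= n)%N -> (size (p + q)%R <= n)%N.
Proof. move=> hp hq; apply: leq_trans (size_polyD _ _) _; by rewrite geq_max hp hq. Qed.
Lemma sB n p q : (size p <= n)%N -> (size q <= n)%N -> (size (p - q)%R <= n)%N.
Proof. by move=> hp hq; apply: sD => //; rewrite size_polyN. Qed.
Lemma sM a b p q : (size p <= a)%N -> (size q <= b)%N -> (size (p * q)%R <= (a + b).-1)%N.
Proof. move=> hp hq; apply: leq_trans (size_polyMleq _ _) _; lia. Qed.
Lemma sN k : (size (k%:R : {poly R}) <= 1)%N.
Proof. by rewrite -polyC_natr size_polyC_leq1. Qed.
Lemma sW n p : (size p <= n)%N -> forall k, (n <= k)%N -> (size p <= k)%N.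
Proof. by move=> h k nk; apply: leq_trans h nk. Qed.

Lemma size_E m : (size (E R m.+1) <= (m + 7))%N.
Proof.
have [sC _] := sizeC R m.+1.
have sX2 : (size ('X ^+ 2 - 2%:R : {poly R})%R <= 3)%N.
  by apply: sB; [rewrite size_polyXn | apply: sW (sN _) _ _].
have sA : (size (Apoly R m.+1) <= 5)%N.
  rewrite /Apoly; apply: sB; last exact: sW (sN _) _ _.
  apply: sB.
  - apply: sW (sM (sN _) (sM sX2 sX2)) _ _ => //; rewrite expr2 //.
  - exact: sW (sM (sN _) sX2) _ _.
have sCm : (size (C R m) <= m.+1)%N.
  clear -R; case: m => [|k]; first by rewrite C0 sN.
  by have [-> _] := sizeC R k.
rewrite /E /=; apply: sD.
- apply: sW (sM sA (eq_leq sC)) _ _; lia.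
- apply: sW (sM (sM (sN 2) (eq_leq (size_polyXn R 2))) sCm) _ _; lia.
Qed.
End SizeB.

Lemma dXsub' (R : comNzRingType) (r : {poly R}) c : ((r * ('X - c%:P))^`()).[c] = r.[c].
Proof. by rewrite derivM derivXsubC mulr1 !hornerE subrr mulr0 add0r. Qed.

Lemma dbl_root (R : comNzRingType) (p : {poly R}) a : p.[a] = 0 -> (p^`()).[a] = 0 ->
  exists q, p = q * ('X - a%:P) ^+ 2.
Proof.
move=> /eqP r0 d0.
have /factor_theorem [q1 e1] : root p a by [].
have /factor_theorem [q e2] : root q1 a by rewrite rootE -(dXsub' q1 a) -e1 d0.
by exists q; rewrite e1 e2 expr2 mulrA.
Qed.

Definition W : {poly algR} := ('X - (2%:R)%:P) * ('X - (-2%:R)%:P).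

Lemma sizeW2 : size (W ^+ 2) = 5%N.
Proof.
rewrite /W exprMn size_mul ?size_exp_XsubC // expf_neq0 // polyXsubC_eq0 //.
Qed.

Lemma W_comp : ('X - (2%:R)%:P) \Po ('X ^+ 2 - 2%:R) = W.
Proof. rewrite /W comp_polyB comp_polyX comp_polyC polyCN !polyC_natr; ring. Qed.

Lemma E_fact m : exists (c : algR) (rs : seq algR), [/\ c != 0,
   all (fun r => -2%:R < r < 2%:R) rs &
   E algR m.+1 = c%:P * \prod_(r <- rs) ('X - r%:P) * W ^+ 2].
Proof.
have [ts [sts szts rts bts]] := C_roots_R m.
have [rs [szrs urs rootrs brs]] := @E_roots algR m ts sts szts rts bts.
have [q eq] := dbl_root (Phi2 algR m) (dPhi2 algR m).
have hc := Phi_comp algR m.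
rewrite eq comp_polyM rmorphXn /= W_comp in hc.
have dv : W ^+ 2 %| Ut algR m.+1 * (E algR m.+1).
  by rewrite -hc mulrA dvdp_mull.
have cop : coprimep (W ^+ 2) (Ut algR m.+1).
  apply: coprimep_expl; rewrite /W coprimepMl !(coprimep_sym _ (Ut _ _)) !coprimep_XsubC.
  by rewrite !rootE Ue2 Uem2 pnatr_eq0 mulf_neq0 ?signr_eq0 ?pnatr_eq0.
rewrite Gauss_dvdpr // in dv.
have [E0 eE0] := dvdpP _ _ dv.
have EE0 : (E algR m.+1) != 0.
  move: szts sts rts bts; case: ts => [|t1 [|t2 ts']] // _ /= /andP[t12 _] rts _.
  have [t0 [tin tn0]] : exists t0, t0 \in [:: t1, t2 & ts'] /\ t0 != 0.
    have [e1|n1] := eqVneq t1 0.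
    - exists t2; rewrite !inE eqxx orbT; split => //.
      by apply/negP => /eqP e2; move: t12; rewrite e1 e2 ltxx.
    - by exists t1; rewrite mem_head.
  have rt : root (C algR m.+2) t0 by rewrite rts.
  have [_ Et _] := @rootfacts algR m t0 rt.
  apply/negP => /eqP e0; move: Et; rewrite e0 horner0 mul0r => /esym /eqP.
  by rewrite !mulf_eq0 !pnatr_eq0 /= (negPf tn0).
have E00 : E0 != 0 by apply: contra EE0 => /eqP e; rewrite eE0 e mul0r.
have rE0 : all (root E0) rs.
  apply/allP => r rin; have := allP rootrs r rin; rewrite eE0 rootM => /orP[//|].
  move: (allP brs r rin) => /andP[a b].
  rewrite /W root_exp //; last exact: mulrC. rewrite rootM !root_XsubC => /orP[] /eqP e; move: a b; rewrite e; lra.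
have ur : uniq_roots rs by rewrite uniq_rootsE.
have [q' eq'] := uniq_roots_prod_XsubC rE0 ur.
have q'0 : q' != 0 by apply: contra E00 => /eqP e; rewrite eq' e mul0r.
have W0 : W ^+ 2 != 0 by rewrite -size_poly_eq0 sizeW2.
have P0 : \prod_(r <- rs) ('X - r%:P) != 0 by rewrite -size_poly_eq0 size_prod_XsubC.
have szE := size_E algR m.
rewrite eE0 size_mul // sizeW2 eq' size_mul // size_prod_XsubC szrs in szE.
have sq : (size q' <= 1)%N by move: szE; set s := size q'; lia.
have eq1 := size1_polyC sq.
exists (q'`_0), rs; split => //.
- by apply: contra q'0 => /eqP e; rewrite eq1 e.
- by rewrite eE0 eq' -eq1.
Qed.


Lemma E_C_roots m (y : algC) : root (E algC m.+1) y -> y ^+ 2 != 4%:R ->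
  exists r : algR, y = algRval r /\ -2%:R < r < 2%:R.
Proof.
move=> ry y4.
have [c [rs [c0 brs eE]]] := E_fact m.
have eC : E algC m.+1 = map_poly algRval (E algR m.+1) by rewrite (@map_E _ _ algRval).
move: ry; rewrite eC eE !rmorphM /= map_polyC rmorph_prod /= !map_polyXsubC !rootM.
have W2 : forall a : algR, (a == 2%:R) || (a == -2%:R) -> y == algRval a -> False.
  move=> a /orP[] /eqP -> /eqP e; move: y4; rewrite e ?rmorphN rmorph_nat ?sqrrN -natrX eqxx //.
case/orP => [/orP[h|h]|/orP[/orP[h|h]|/orP[h|h]]].
- move: h; rewrite rootC => /eqP v0; case/negP: c0; apply/eqP/val_inj; rewrite /= v0 //.
- move: h; under eq_bigr do rewrite map_polyXsubC.
  rewrite -(big_map algRval predT (fun z => 'X - z%:P)) root_prod_XsubC => /mapP [r rin ->].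
  by exists r; split => //; apply: (allP brs).
- by move: h; rewrite root_XsubC => /(W2 _ (introT orP (or_introl (eqxx _)))).
- by move: h; rewrite root_XsubC => /(W2 _ (introT orP (or_intror (eqxx _)))).
- by move: h; rewrite root_XsubC => /(W2 _ (introT orP (or_introl (eqxx _)))).
- by move: h; rewrite root_XsubC => /(W2 _ (introT orP (or_intror (eqxx _)))).
Qed.

Theorem propositionB5 (n : nat) (hn : (1 <= n)%N) :
  let P : {poly algC} := Phi algC n in
  [/\ P.[2] = 0, (P^`()).[2] = 0, (P^`(2)).[2] != 0
    & forall z : algC, root P z -> z != 2 ->
        z \is Num.real /\ (-2 < z < 2)].
Proof.
case: n hn => // m _ P.
split.
- exact: Phi2.
- exact: dPhi2.
- exact: ddPhi2_neq0.
move=> z rz z2.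
set y := sqrtC (z + 2%:R).
have yz : y ^+ 2 - 2%:R = z by rewrite sqrtCK addrK.
have y4 : y ^+ 2 != 4%:R.
  apply: contra z2 => /eqP e; rewrite -yz e; apply/eqP; ring.
have hc := congr1 (horner^~ y) (Phi_comp algC m).
move: hc; rewrite /= hornerM hornerX horner_comp.
have -> : ('X ^+ 2 - 2%:R : {poly algC}).[y] = z by rewrite -yz; hsimp.
rewrite (rootP rz) mulr0 hornerM => /esym /eqP; rewrite mulf_eq0 => hU.
have [r [yr br]] : exists r : algR, y = algRval r /\ -2%:R < r < 2%:R.
  case/orP: hU => [/eqP hU|/eqP hE].
  - have [yR yn _] := @rootU_real y m.+1 (introT eqP hU).
    exists (in_algR yR); split => //.
    exact: (@toR (in_algR yR) yn y4).
  - by apply: (@E_C_roots m y _ y4); apply/rootP.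
have zr : z = algRval (r ^+ 2 - 2%:R) by rewrite -yz yr rmorphB rmorphXn rmorph_nat.
have zm2 : z != - 2%:R.
  apply/negP => /eqP e; move: rz; rewrite e rootE /P Phim2.
  by rewrite !mulf_eq0 !pnatr_eq0 signr_eq0.
split; first by rewrite zr algRvalP.
have r2 : r ^+ 2 - 2%:R != - 2%:R.
  apply: contra zm2 => /eqP e; rewrite zr e rmorphN rmorph_nat //.
have a : -2%:R < r ^+ 2 - 2%:R.
  rewrite lt_neqAle eq_sym r2 /=. have := sqr_ge0 r. lra.
have b : r ^+ 2 - 2%:R < 2%:R.
  case/andP: br => b1 b2. nra.
rewrite zr.
have -> : (-2 : algC) = algRval (-2%:R) by rewrite rmorphN rmorph_nat.
have -> : (2 : algC) = algRval (2%:R) by rewrite rmorph_nat.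
by rewrite -!ltR a b.
Qed.
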